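(* All POPs $(a,b,c;d,e)$ with either $\{a,b,c\}=\{1,2,3\}$ and $\{d,e\}=\{4,5\}$, or $\{a,b,c\}=\{3,4,5\}$ and $\{d,e\}=\{1,2\}$, are Wilf-equivalent to one another.
   Context: A partially ordered pattern (POP) $p$ of size $k$ is a partial order $\le_p$ on $[k]$. A permutation $\pi=\pi_1\cdots\pi_n$ contains $p$ if there are indices $i_1<\dots<i_k$ with $\pi_{i_j}<\pi_{i_m}$ whenever $j<_p m$; otherwise it avoids $p$. $p\sim q$ (Wilf-equivalence) means the numbers of permutations of $[n]$ avoiding $p$ and avoiding $q$ coincide for all $n\ge1$. Notation: $(a,b,c;d,e)$ denotes the POP of size $5$ on $\{a,b,c,d,e\}=[5]$ whose relations are generated by the chain $c<b<a$ and the chain $e<d$ (no other comparabilities). *)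

(* Defs.v *)
From mathcomp Require Import all_boot all_fingroup.
Set Implicit Arguments. Unset Strict Implicit. Unset Printing Implicit Defensive.

(* A POP of size k: a (strict) partial order on positions 'I_k
   (position i : 'I_k stands for the integer i+1 of [k]). *)
Definition pop (k : nat) := rel 'I_k.

Definition contains (k n : nat) (p : pop k) (pi : 'S_n) : bool :=
  [exists f : {ffun 'I_k -> 'I_n},
     [forall j : 'I_k, forall m : 'I_k,
        ((j < m)%N ==> (f j < f m)%N) && (p j m ==> (pi (f j) < pi (f m))%N)]].

Definition avoids (k n : nat) (p : pop k) (pi : 'S_n) : bool := ~~ contains p pi.

Definition av_count (k : nat) (p : pop k) (n : nat) : nat :=
  #|[set pi : 'S_n | avoids p pi]|.

Definition wilf_equiv (k l : nat) (p : pop k) (q : pop l) : Prop :=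
  forall n : nat, (1 <= n)%N -> av_count p n = av_count q n.

(* The POP (a,b,c;d,e) of size 5: strict order generated by c<b<a and e<d,
   i.e. exactly the strict relations c<b, b<a, c<a, e<d (elements are
   1-based integers a,...,e in [5]; position i : 'I_5 is the integer i+1). *)
Definition pop5 (a b c d e : nat) : pop 5 :=
  fun i j => (i.+1, j.+1) \in [:: (c, b); (b, a); (c, a); (e, d)].

Definition admissible (a b c d e : nat) : bool :=
  (perm_eq [:: a; b; c] [:: 1; 2; 3] && perm_eq [:: d; e] [:: 4; 5])
  || (perm_eq [:: a; b; c] [:: 3; 4; 5] && perm_eq [:: d; e] [:: 1; 2]).

(* Main.v *)
Require Import Defs.
From mathcomp Require Import all_boot all_fingroup zify.
Set Implicit Arguments. Unset Strict Implicit. Unset Printing Implicit Defensive.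
Notation perms := permutations.


Fixpoint subseqs (s : seq nat) : seq (seq nat) :=
  if s is x :: s' then map (cons x) (subseqs s') ++ subseqs s' else [:: [::]].

Lemma mem_subseqs s t : (t \in subseqs s) = subseq t s.
Proof.
elim: s t => [|x s IH] t /=; first by rewrite inE; case: t.
rewrite mem_cat IH; case: t => [|y t] /=; first by rewrite !sub0seq orbT.
case: eqP => [->|ne].
  have Ix : injective (cons x) by move=> a b [].
  rewrite (mem_map Ix) IH.
  by case H: (subseq t s) => //=; apply/negbTE; apply: contraFN H => /cons_subseq.
suff -> : (y :: t \in map (cons x) (subseqs s)) = false by [].
by apply/mapP => [[t' _ [E _]]].
Qed.

Definition contp (P : pred (seq nat)) s := has P (subseqs s).

Lemma contpP (P : pred (seq nat)) s : reflect (exists2 t, subseq t s & P t) (contp P s).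
Proof.
apply: (iffP hasP) => [[t]|[t]]; rewrite ?mem_subseqs => H1 H2; exists t => //.
by rewrite mem_subseqs.
Qed.

Lemma contp_cons (P : pred (seq nat)) x s :
  contp P (x :: s) = contp (fun t => P (x :: t)) s || contp P s.
Proof. by rewrite /contp /= has_cat has_map. Qed.

Lemma contp_nil (P : pred (seq nat)) : contp P [::] = P [::].
Proof. by rewrite /contp /= orbF. Qed.

Lemma contp_sub (P : pred (seq nat)) s1 s2 : subseq s1 s2 -> contp P s1 -> contp P s2.
Proof.
move=> S /contpP [t H1 H2]; apply/contpP; exists t => //.
exact: subseq_trans S.
Qed.

Lemma contp_imp (P Q : pred (seq nat)) s :
  (forall t, P t -> Q t) -> contp P s -> contp Q s.
Proof. by move=> H /contpP [t H1 /H H2]; apply/contpP; exists t. Qed.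

Lemma eq_contp (P Q : pred (seq nat)) s :
  (forall t, subseq t s -> P t = Q t) -> contp P s = contp Q s.
Proof. by move=> H; apply: eq_in_has => t; rewrite mem_subseqs => /H. Qed.

Lemma contp_map (P : pred (seq nat)) f s : contp P (map f s) = contp (fun t => P (map f t)) s.
Proof.
apply/contpP/contpP => [[t /subseqP [m Hm ->] Pt]|[t H Pt]].
  by exists (mask m s); [exact: mask_subseq | rewrite -map_mask in Pt].
by exists (map f t) => //; exact: map_subseq.
Qed.

Lemma contp_rev (P : pred (seq nat)) s : contp P (rev s) = contp (fun t => P (rev t)) s.
Proof.
apply/contpP/contpP => [[t H Pt]|[t H Pt]].
  by exists (rev t); rewrite ?revK // -subseq_rev revK.
by exists (rev t) => //; rewrite subseq_rev.
Qed.

Lemma contp_const (b : bool) (P : pred (seq nat)) s :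
  contp (fun t => b && P t) s = b && contp P s.
Proof. by case: b => //=; rewrite /contp has_pred0. Qed.

Lemma contp1 (Q : pred nat) s :
  contp (fun t => (size t == 1) && Q (nth 0 t 0)) s = has Q s.
Proof.
apply/contpP/hasP => [[t H /andP [St Qt]]|[z zs Qz]].
  case: t St H Qt => [|z [|]] //= _; rewrite sub1seq => H Qz; by exists z.
by exists [:: z] => //; rewrite sub1seq.
Qed.

Lemma contp0 (b : bool) s : contp (fun t => (size t == 0) && b) s = b.
Proof.
by apply/contpP/idP => [[t _ /andP []] //| Hb]; exists [::]; rewrite ?sub0seq.
Qed.

Definition spl (P Q : pred (seq nat)) s :=
  has (fun i => contp P (take i s) && contp Q (drop i s)) (iota 0 (size s).+1).

Lemma splP (P Q : pred (seq nat)) s :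
  reflect (exists i, contp P (take i s) && contp Q (drop i s)) (spl P Q s).
Proof.
apply: (iffP hasP) => [[i _ H]|[i H]]; first by exists i.
case: (leqP i (size s)) => Hi.
  by exists i => //; rewrite mem_iota add0n ltnS.
exists (size s); first by rewrite mem_iota add0n ltnS leqnn.
by rewrite take_size drop_size -(take_oversize (ltnW Hi)) -(drop_oversize (ltnW Hi)).
Qed.

Lemma spl_contp (P Q : pred (seq nat)) s : spl P Q s -> contp Q s.
Proof. by move/splP => [i /andP [_]]; apply: contp_sub; exact: drop_subseq. Qed.

Lemma spl_cons (P Q : pred (seq nat)) x s : ~~ P [::] ->
  spl P Q (x :: s) = spl (fun t => P (x :: t)) Q s || spl P Q s.
Proof.
move=> HP; apply/splP/orP => [[[|i]]|[]/splP [i H]].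
- by rewrite take0 contp_nil (negbTE HP).
- by rewrite /= contp_cons andb_orl => /orP [] H; [left|right]; apply/splP; exists i.
- by exists i.+1; rewrite /= contp_cons andb_orl H.
- by exists i.+1; rewrite /= contp_cons andb_orl H orbT.
Qed.

Lemma spl_imp (P P' Q Q' : pred (seq nat)) s :
  (forall t, P t -> P' t) -> (forall t, Q t -> Q' t) -> spl P Q s -> spl P' Q' s.
Proof.
move=> H1 H2 /splP [i /andP [A B]]; apply/splP; exists i.
by rewrite (contp_imp H1 A) (contp_imp H2 B).
Qed.

Lemma eq_spl (P P' Q Q' : pred (seq nat)) s :
  (forall t, subseq t s -> P t = P' t) -> (forall t, subseq t s -> Q t = Q' t) ->
  spl P Q s = spl P' Q' s.
Proof.
move=> H1 H2; apply: eq_in_has => i _.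
rewrite (@eq_contp P P') ?(@eq_contp Q Q') // => t St.
  by apply: H2; apply: subseq_trans St (drop_subseq _ _).
by apply: H1; apply: subseq_trans St (take_subseq _ _).
Qed.

Lemma spl_map (P Q : pred (seq nat)) f s :
  spl P Q (map f s) = spl (fun t => P (map f t)) (fun t => Q (map f t)) s.
Proof.
by rewrite /spl size_map; apply: eq_has => i; rewrite -map_take -map_drop !contp_map.
Qed.

Lemma spl_rev (P Q : pred (seq nat)) s :
  spl P Q (rev s) = spl (fun t => Q (rev t)) (fun t => P (rev t)) s.
Proof.
apply/splP/splP => [[i]|[j]].
  rewrite take_rev drop_rev !contp_rev andbC => H; by exists (size s - i).
case: (leqP j (size s)) => Hj.
  exists (size s - j); rewrite take_rev drop_rev !contp_rev subKn // andbC.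
  exact.
rewrite take_oversize ?drop_oversize ?(ltnW Hj) // => H.
exists 0; rewrite take_rev drop_rev !contp_rev subn0 take_size drop_size andbC.
exact.
Qed.


Lemma count_perms_cons (P : pred (seq nat)) W : uniq W -> 0 < size W ->
  count P (perms W) = \sum_(x <- W) count (fun t => P (x :: t)) (perms (rem x W)).
Proof.
move=> U H; rewrite (seq.permP (permutationsE H)) undup_id //.
rewrite count_flatten sumnE !big_map; apply: eq_bigr => x _; by rewrite count_map.
Qed.

Lemma perm_map_perms (g : seq nat -> seq nat) W W' :
  {in perms W &, injective g} -> (forall t, perm_eq t W -> perm_eq (g t) W') ->
  size (perms W') <= size (perms W) -> perm_eq (map g (perms W)) (perms W').
Proof.
move=> Ig Hg Hs.
have U1 : uniq (map g (perms W)) by rewrite map_inj_in_uniq ?permutations_uniq.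
apply: uniq_perm => //; first exact: permutations_uniq.
apply: (uniq_min_size U1 _ _).2; last by rewrite size_map.
move=> u /mapP [t Ht ->]; rewrite mem_permutations; apply: Hg.
by rewrite -mem_permutations.
Qed.

Lemma count_perms_rev (P : pred (seq nat)) (W : seq nat) :
  count (fun s : seq nat => P (rev s)) (perms W) = count P (perms W).
Proof.
rewrite -(count_map rev P); apply/seq.permP/perm_map_perms => //.
- by move=> a b _ _; apply: (inv_inj (@revK nat)).
- by move=> t; rewrite perm_rev.
Qed.

Lemma count_perms_map (P : pred (seq nat)) (f : nat -> nat) (W : seq nat) : uniq W -> {in W &, injective f} ->
  count P (perms (map f W)) = count (fun s : seq nat => P (map f s)) (perms W).
Proof.
move=> U If; rewrite -(count_map (map f) P); apply/esym/seq.permP/perm_map_perms.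
- move=> a b Ha Hb; apply: (inj_in_map If); rewrite inE; apply/allP => z.
  + by move: Ha; rewrite mem_permutations => /perm_mem ->.
  + by move: Hb; rewrite mem_permutations => /perm_mem ->.
- by move=> t Ht; apply: perm_map.
- by rewrite !size_permutations ?size_map // map_inj_in_uniq.
Qed.

Lemma count_perms_perm (P : pred (seq nat)) (W W' : seq nat) : perm_eq W W' ->
  count P (perms W) = count P (perms W').
Proof. by move=> H; apply/seq.permP/perm_permutations. Qed.

Lemma mem_perms_sub (W s t : seq nat) : s \in perms W -> subseq t s -> {subset t <= W}.
Proof.
rewrite mem_permutations => /perm_mem H /mem_subseq S z /S.
by rewrite H.
Qed.


Definition pat3 (i0 i1 i2 : nat) (t : seq nat) : bool :=
  (size t == 3) && (nth 0 t i0 < nth 0 t i1) && (nth 0 t i1 < nth 0 t i2).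

Lemma count_rem (P : pred nat) x (W : seq nat) : x \in W ->
  count P W = P x + count P (rem x W).
Proof. by move=> H; rewrite (seq.permP (perm_to_rem H)). Qed.

Lemma ex_max (L : seq nat) : L != [::] ->
  exists2 x, x \in L & forall z, z \in L -> z <= x.
Proof.
elim: L => [//|a L IH] _; case: (altP (L =P [::])) => [->|/IH [x Hx Hm]].
  by exists a; rewrite ?inE // => z; rewrite inE => /eqP ->.
case: (leqP a x) => Ha.
  by exists x; rewrite ?inE ?Hx ?orbT // => z; rewrite inE => /orP [/eqP ->|/Hm].
exists a; rewrite ?inE ?eqxx // => z; rewrite inE => /orP [/eqP ->//|/Hm H].
by apply: leq_trans H (ltnW Ha).
Qed.

Lemma ex_min (L : seq nat) : L != [::] ->
  exists2 x, x \in L & forall z, z \in L -> x <= z.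
Proof.
elim: L => [//|a L IH] _; case: (altP (L =P [::])) => [->|/IH [x Hx Hm]].
  by exists a; rewrite ?inE // => z; rewrite inE => /eqP ->.
case: (leqP x a) => Ha.
  by exists x; rewrite ?inE ?Hx ?orbT // => z; rewrite inE => /orP [/eqP ->|/Hm].
exists a; rewrite ?inE ?eqxx // => z; rewrite inE => /orP [/eqP ->//|/Hm H].
by apply: leq_trans (ltnW Ha) H.
Qed.

Lemma leq_sumn (W : seq nat) z : z \in W -> z <= sumn W.
Proof.
elim: W => [//|a W IH]; rewrite inE /= => /orP [/eqP ->|/IH H]; first exact: leq_addr.
by apply: leq_trans H (leq_addl _ _).
Qed.

Lemma sum_unique (W : seq nat) (Pr : pred nat) (g : nat -> nat) x0 :
  uniq W -> x0 \in W -> (forall x, x \in W -> Pr x = (x == x0)) ->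
  \sum_(x <- W | Pr x) g x = g x0.
Proof.
move=> U H0 H; rewrite -big_filter (@eq_in_filter _ _ (pred1 x0)) //.
by rewrite filter_pred1_uniq // big_seq1.
Qed.

Lemma count_lt_mono (W : seq nat) x1 x2 : x1 < x2 -> x2 \in W ->
  count (ltn x2) W < count (ltn x1) W.
Proof.
move=> H12 H2.
have E : count (ltn x1) W = count (ltn x2) W + count (fun z => (x1 < z) && (z <= x2)) W.
  rewrite -count_predUI (@eq_count _ (predI _ _) pred0) ?count_pred0 ?addn0.
    by apply: eq_count => z /=; lia.
  by move=> z /=; lia.
rewrite E -addn1 leq_add2l -has_count; apply/hasP; exists x2 => //=.
by rewrite H12 leqnn.
Qed.

Lemma count_lt_size (W : seq nat) x : x \in W -> count (ltn x) W < size W.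
Proof.
move=> H; rewrite -(count_predC (ltn x) W) -addn1 leq_add2l -has_count.
by apply/hasP; exists x => //=; rewrite ltnn.
Qed.

Lemma sum1 n (W : seq nat) y (G : nat -> nat) : uniq W -> size W = n.+1 ->
  \sum_(x <- W | x <= y) G (count (ltn x) W) = \sum_(count (ltn y) W <= j < n.+1) G j.
Proof.
move=> U S; rewrite -big_filter -(big_map (fun x => count (ltn x) W) xpredT G).
apply: perm_big.
set s1 := map _ _.
have Inj : {in filter (fun x => x <= y) W &, injective (fun x => count (ltn x) W)}.
  move=> a b; rewrite !mem_filter => /andP [_ Ha] /andP [_ Hb] E.
  case: (ltngtP a b) => // H.
    by move: (count_lt_mono H Hb); rewrite E ltnn.
  by move: (count_lt_mono H Ha); rewrite E ltnn.
have U1 : uniq s1 by rewrite map_inj_in_uniq // filter_uniq.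
apply: uniq_perm => //; first exact: iota_uniq.
apply: (uniq_min_size U1 _ _).2.
  move=> j /mapP [x]; rewrite mem_filter => /andP [Hxy Hx] ->.
  rewrite mem_index_iota -S count_lt_size // andbT.
  by apply: sub_count => z /=; lia.
rewrite size_map size_filter /index_iota size_iota -S.
rewrite -(count_predC (fun x => x <= y) W) (@eq_count _ (predC _) (ltn y)).
  by rewrite addnK.
by move=> z /=; rewrite -ltnNge.
Qed.

Fixpoint F n m : nat :=
  if n is n'.+1 then \sum_(m <= j < n'.+1) F n' j + (if m is m'.+1 then F n' m' else 0)
  else 1.

Definition Dp (y : nat) (s : seq nat) :=
  ~~ contp (pat3 0 1 2) s && ~~ contp (fun t => pat3 0 1 2 (y :: t)) s.
Definition Ep (y : nat) (s : seq nat) :=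
  ~~ contp (pat3 0 2 1) s && ~~ contp (fun t => pat3 0 2 1 (y :: t)) s.

Lemma asc_cons y x s :
  contp (fun t => pat3 0 1 2 (y :: t)) (x :: s) =
  ((y < x) && has (ltn x) s) || contp (fun t => pat3 0 1 2 (y :: t)) s.
Proof.
rewrite contp_cons; congr (_ || _); rewrite -contp1 -contp_const.
apply: eq_contp => t _; rewrite /pat3 /=.
by rewrite !eqSS; case: (size t == 1); case: (y < x).
Qed.

Lemma dsc_cons y x s :
  contp (fun t => pat3 0 2 1 (y :: t)) (x :: s) =
  has (fun z => (y < z) && (z < x)) s || contp (fun t => pat3 0 2 1 (y :: t)) s.
Proof.
rewrite contp_cons; congr (_ || _); rewrite -contp1.
apply: eq_contp => t _; rewrite /pat3 /=.
by rewrite !eqSS; case: (size t == 1).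
Qed.

Lemma bA (a b c : bool) : (c -> a) -> ~~ (a || b) && ~~ c = ~~ b && ~~ a.
Proof. by case: a; case: b; case: c => // /(_ isT). Qed.
Lemma bB (a b c : bool) : (a -> c) -> ~~ (a || b) && ~~ c = ~~ b && ~~ c.
Proof. by case: a; case: b; case: c => // /(_ isT). Qed.

Lemma Dc_rec (W : seq nat) y : uniq W -> 0 < size W ->
  count (Dp y) (perms W) = \sum_(x <- W)
   ((if x <= y then count (Dp x) (perms (rem x W)) else 0) +
    (if (y < x) && ~~ has (ltn x) (rem x W) then count (Dp y) (perms (rem x W)) else 0)).
Proof.
move=> U S; rewrite count_perms_cons //; apply: eq_bigr => x _.
case: leqP => Hxy /=.
- rewrite addn0; apply: eq_in_count => s _; rewrite /Dp contp_cons asc_cons.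
  rewrite (ltnNge y x) Hxy /=; apply: bA; apply: contp_imp => t.
  rewrite /pat3 /= => /andP [/andP [A B] C]; rewrite A C andbT.
  exact: leq_ltn_trans Hxy B.
- rewrite add0n; case Hh: (has (ltn x) (rem x W)) => /=.
    rewrite -(count_pred0 (perms (rem x W))); apply: eq_in_count => s.
    rewrite mem_permutations => Hs.
    by rewrite /Dp contp_cons asc_cons Hxy (perm_has _ Hs) Hh /= andbF.
  apply: eq_in_count => s; rewrite mem_permutations => Hs.
  rewrite /Dp contp_cons asc_cons Hxy (perm_has _ Hs) Hh /=.
  apply: bB; apply: contp_imp => t.
  rewrite /pat3 /= => /andP [/andP [A B] C]; rewrite A C andbT.
  exact: ltn_trans Hxy B.
Qed.

Lemma Ec_rec (W : seq nat) y : uniq W -> 0 < size W ->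
  count (Ep y) (perms W) = \sum_(x <- W)
   ((if x <= y then count (Ep x) (perms (rem x W)) else 0) +
    (if (y < x) && ~~ has (fun z => (y < z) && (z < x)) (rem x W)
     then count (Ep y) (perms (rem x W)) else 0)).
Proof.
move=> U S; rewrite count_perms_cons //; apply: eq_bigr => x _.
case: leqP => Hxy /=.
- rewrite addn0; apply: eq_in_count => s _; rewrite /Ep contp_cons dsc_cons.
  have -> : has (fun z => (y < z) && (z < x)) s = false.
    by apply/hasP => [[z _ /andP [A B]]]; lia.
  rewrite /=; apply: bA; apply: contp_imp => t.
  rewrite /pat3 /= => /andP [/andP [A B] C]; rewrite A C andbT.
  exact: leq_ltn_trans Hxy B.
- rewrite add0n; case Hh: (has _ (rem x W)) => /=.
    rewrite -(count_pred0 (perms (rem x W))); apply: eq_in_count => s.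
    rewrite mem_permutations => Hs.
    by rewrite /Ep contp_cons dsc_cons (perm_has _ Hs) Hh /= andbF.
  apply: eq_in_count => s; rewrite mem_permutations => Hs.
  rewrite /Ep contp_cons dsc_cons (perm_has _ Hs) Hh /=.
  apply: bB; apply: contp_imp => t.
  rewrite /pat3 /= => /andP [/andP [A B] C]; rewrite A C andbT.
  exact: ltn_trans Hxy B.
Qed.

Lemma gen_F (cnt : nat -> seq nat -> nat) (Pr : nat -> nat -> seq nat -> bool) :
  (forall y, cnt y [::] = 1) ->
  (forall W y, uniq W -> 0 < size W -> cnt y W = \sum_(x <- W)
     ((if x <= y then cnt x (rem x W) else 0) +
      (if Pr y x W then cnt y (rem x W) else 0))) ->
  (forall W y x, uniq W -> Pr y x W -> y < x) ->
  (forall W y, uniq W -> has (ltn y) W ->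
     exists2 x0, x0 \in W & forall x, x \in W -> Pr y x W = (x == x0)) ->
  forall n W y, uniq W -> size W = n -> cnt y W = F n (count (ltn y) W).
Proof.
move=> H0 Hrec Hlt Hex; elim=> [|n IH] W y U S.
  by case: W S U => // _ _; rewrite H0.
rewrite Hrec ?S // big_split /=.
transitivity (\sum_(count (ltn y) W <= j < n.+1) F n j +
   (if count (ltn y) W is m.+1 then F n m else 0)); last by [].
congr (_ + _).
  rewrite -big_mkcond /= big_seq_cond.
  transitivity (\sum_(i <- W | (i \in W) && (i <= y)) F n (count (ltn i) W)).
    apply: eq_bigr => x /andP [Hx _]; rewrite IH ?rem_uniq ?size_rem ?S //.
    by rewrite (count_rem (ltn x) Hx) /= ltnn.
  by rewrite -big_seq_cond (sum1 _ _ U S).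
rewrite -big_mkcond /=.
case Cm: (count (ltn y) W) => [|m].
  rewrite big1_seq // => x /andP [Hp Hx]; move: (Hlt _ _ _ U Hp) => Hyx.
  suff : 0 < count (ltn y) W by rewrite Cm.
  by rewrite -has_count; apply/hasP; exists x.
have Hh : has (ltn y) W by rewrite has_count Cm.
case: (Hex W y U Hh) => x0 Hx0 Hp.
rewrite (sum_unique _ U Hx0 Hp) IH ?rem_uniq ?size_rem ?S //.
move: Cm; rewrite (count_rem (ltn y) Hx0) /=.
have -> : y < x0 by apply: (Hlt W y x0 U); rewrite Hp ?eqxx.
by rewrite add1n => [[->]].
Qed.

Lemma D_F n (W : seq nat) y : uniq W -> size W = n ->
  count (Dp y) (perms W) = F n (count (ltn y) W).
Proof.
apply: (@gen_F (fun y W => count (Dp y) (perms W))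
   (fun y x W => (y < x) && ~~ has (ltn x) (rem x W))).
- by [].
- by move=> W' y' U' S'; apply: Dc_rec.
- by move=> W' y' x _ /andP [].
move=> W' y' U' Hh.
have [x0 Hx0 Hm] : exists2 x0, x0 \in W' & forall z, z \in W' -> z <= x0.
  by apply: ex_max; case: (W') Hh.
exists x0 => // x Hx.
case: (altP (x =P x0)) => [->|Hne].
  case/hasP: Hh => z Hz Hyz; rewrite (leq_trans Hyz (Hm _ Hz)) /=.
  apply/hasPn => z' Hz'; rewrite -leqNgt; apply: Hm.
  exact: (mem_subseq (rem_subseq _ _) Hz').
apply/negbTE; rewrite negb_and negbK; apply/orP; right.
apply/hasP; exists x0.
  by rewrite (mem_rem_uniq _ U') inE /= eq_sym Hne.
by rewrite /= ltn_neqAle Hne Hm.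
Qed.

Lemma E_F n (W : seq nat) y : uniq W -> size W = n ->
  count (Ep y) (perms W) = F n (count (ltn y) W).
Proof.
apply: (@gen_F (fun y W => count (Ep y) (perms W))
   (fun y x W => (y < x) && ~~ has (fun z => (y < z) && (z < x)) (rem x W))).
- by [].
- by move=> W' y' U' S'; apply: Ec_rec.
- by move=> W' y' x _ /andP [].
move=> W' y' U' Hh.
have [x0 Hx0 Hm] : exists2 x0, x0 \in filter (ltn y') W' &
    forall z, z \in filter (ltn y') W' -> x0 <= z.
  by apply: ex_min; rewrite -size_eq0 size_filter -lt0n -has_count.
move: Hx0; rewrite mem_filter /= => /andP [Hyx0 Hx0].
exists x0 => // x Hx.
case: (altP (x =P x0)) => [->|Hne].
  rewrite Hyx0 /=; apply/hasPn => z' Hz'; apply/negP => /andP [A B].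
  have : x0 <= z'.
    apply: Hm; rewrite mem_filter /= A /=.
    exact: (mem_subseq (rem_subseq _ _) Hz').
  by rewrite leqNgt B.
case: (ltnP y' x) => Hyx //=; apply/negbTE; rewrite negbK.
apply/hasP; exists x0.
  by rewrite (mem_rem_uniq _ U') inE /= eq_sym Hne.
rewrite Hyx0 /= ltn_neqAle eq_sym Hne /=.
by apply: Hm; rewrite mem_filter /= Hyx Hx.
Qed.


Definition Acnt (P : pred (seq nat)) (W : seq nat) :=
  count (fun s => ~~ contp P s) (perms W).

Lemma Acnt_ext (P Q : pred (seq nat)) W : P =1 Q -> Acnt P W = Acnt Q W.
Proof. by move=> H; apply: eq_count => s; rewrite /contp (eq_has H). Qed.

Lemma Acnt_rev (P : pred (seq nat)) W : Acnt (fun t => P (rev t)) W = Acnt P W.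
Proof.
rewrite /Acnt -(count_perms_rev (fun s => ~~ contp P s)).
by apply: eq_count => s /=; rewrite contp_rev.
Qed.

Lemma pat3_rev i0 i1 i2 t : i0 < 3 -> i1 < 3 -> i2 < 3 ->
  pat3 i0 i1 i2 (rev t) = pat3 (2 - i0) (2 - i1) (2 - i2) t.
Proof.
move=> H0 H1 H2; rewrite /pat3 size_rev; case: eqP => //= H.
by rewrite !nth_rev ?H // !subSS.
Qed.

Lemma no_count_above (W : seq nat) : count (ltn (sumn W)) W = 0.
Proof.
apply/eqP; rewrite eqn0Ngt -has_count; apply/hasPn => z Hz.
by rewrite /= -leqNgt leq_sumn.
Qed.

Lemma A123_F W : uniq W -> Acnt (pat3 0 1 2) W = F (size W) 0.
Proof.
move=> U; have := D_F (sumn W) U erefl; rewrite no_count_above => <-.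
apply: eq_in_count => s Hs; rewrite /Dp.
suff -> : contp (fun t => pat3 0 1 2 (sumn W :: t)) s = false by rewrite andbT.
apply/contpP => [[t St /andP [/andP [Hsz H] _]]].
move: Hsz H => /= /eqP [Hsz]; rewrite ltnNge leq_sumn //.
apply: (mem_perms_sub Hs St); apply: mem_nth; by rewrite Hsz.
Qed.

Lemma A132_F W : uniq W -> Acnt (pat3 0 2 1) W = F (size W) 0.
Proof.
move=> U; have := E_F (sumn W) U erefl; rewrite no_count_above => <-.
apply: eq_in_count => s Hs; rewrite /Ep.
suff -> : contp (fun t => pat3 0 2 1 (sumn W :: t)) s = false by rewrite andbT.
apply/contpP => [[t St /andP [/andP [Hsz H] _]]].
move: Hsz H => /= /eqP [Hsz]; rewrite ltnNge leq_sumn //.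
apply: (mem_perms_sub Hs St); apply: mem_nth; by rewrite Hsz.
Qed.

Lemma A132 W : uniq W -> Acnt (pat3 0 2 1) W = Acnt (pat3 0 1 2) W.
Proof. by move=> U; rewrite A123_F ?A132_F. Qed.

Lemma A210 W : Acnt (pat3 2 1 0) W = Acnt (pat3 0 1 2) W.
Proof.
rewrite -(Acnt_rev (pat3 0 1 2)); apply: Acnt_ext => t.
by rewrite pat3_rev.
Qed.

Lemma A201 W : uniq W -> Acnt (pat3 2 0 1) W = Acnt (pat3 0 1 2) W.
Proof.
move=> U; rewrite -A132 // -(Acnt_rev (pat3 0 2 1)); apply: Acnt_ext => t.
by rewrite pat3_rev.
Qed.

Lemma Acnt_comp i0 i1 i2 N (W : seq nat) : uniq W -> (forall z, z \in W -> z <= N) ->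
  i0 < 3 -> i1 < 3 -> i2 < 3 ->
  Acnt (pat3 i0 i1 i2) (map (fun x => N - x) W) = Acnt (pat3 i2 i1 i0) W.
Proof.
move=> U HN H0 H1 H2; rewrite /Acnt count_perms_map //; last first.
  move=> a b Ha Hb E; have := HN a Ha; have := HN b Hb; lia.
apply: eq_in_count => s Hs /=; rewrite contp_map; congr negb.
apply: eq_contp => t St; rewrite /pat3 size_map; case: eqP => //= H3.
have Hn : forall i, i < 3 -> nth 0 t i <= N.
  by move=> i Hi; apply: HN; apply: (mem_perms_sub Hs St); apply: mem_nth; rewrite H3.
rewrite !(nth_map 0) ?H3 // !ltn_sub2lE ?Hn //.
by rewrite andbC.
Qed.

Lemma A_all i0 i1 i2 W : uniq W -> perm_eq [:: i0; i1; i2] [:: 0; 1; 2] ->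
  Acnt (pat3 i0 i1 i2) W = Acnt (pat3 0 1 2) W.
Proof.
move=> U H.
have M : forall i, i \in [:: i0; i1; i2] -> (i == 0) || (i == 1) || (i == 2).
  by move=> i; rewrite (perm_mem H) !inE orbA.
have := M i0; have := M i1; have := M i2; rewrite !inE !eqxx !orbT.
move=> /(_ isT) /orP [/orP [] | ] /eqP E2;
move=> /(_ isT) /orP [/orP [] | ] /eqP E1;
move=> /(_ isT) /orP [/orP [] | ] /eqP E0; subst; move: H => //= _.
all: try solve [by [] | rewrite A132 // | rewrite A210 // | rewrite A201 //].
all: pose N := sumn W; pose W' := map (fun x => N - x) W.
all: have HN : forall z, z \in W -> z <= N by move=> z; apply: leq_sumn.
all: have U' : uniq W' by rewrite map_inj_in_uniq // => a b Ha Hb E; have := HN a Ha; have := HN b Hb; lia.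
all: first [rewrite -(@Acnt_comp 0 2 1 N W U HN) // A132 // | rewrite -(@Acnt_comp 2 0 1 N W U HN) // A201 //].
all: by rewrite (@Acnt_comp 0 1 2 N W U HN) // A210.
Qed.


Definition taur (r : rel nat) (t : seq nat) : bool :=
  (size t == 2) && r (nth 0 t 0) (nth 0 t 1).

Definition Ncnt (r : rel nat) (Q : pred (seq nat)) (W : seq nat) :=
  count (fun s => ~~ spl (taur r) Q s) (perms W).

Definition Bp (r : rel nat) (Q : pred (seq nat)) (y : nat) (s : seq nat) :=
  contp Q s && ~~ spl (taur r) Q s && ~~ spl (fun t => taur r (y :: t)) Q s.

Lemma count_disj (a b c : pred (seq nat)) s :
  (forall x, a x && b x = false) -> (forall x, c x = a x || b x) ->
  count c s = count a s + count b s.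
Proof.
move=> Hab Hc; rewrite -count_predUI (@eq_count _ (predI a b) pred0) ?count_pred0 ?addn0.
  by apply: eq_count => x; rewrite Hc.
by move=> x /=; rewrite Hab.
Qed.

Lemma spl_const (b : bool) (Q : pred (seq nat)) s :
  spl (fun t => (size t == 0) && b) Q s = b && contp Q s.
Proof.
apply/splP/andP => [[i /andP [A B]]|[A B]].
  by rewrite contp0 in A; split => //; apply: contp_sub B; exact: drop_subseq.
by exists 0; rewrite take0 drop0 contp0 A B.
Qed.

Lemma splY_cons r (Q : pred (seq nat)) y x s :
  spl (fun t => taur r (y :: t)) Q (x :: s) =
  (r y x && contp Q s) || spl (fun t => taur r (y :: t)) Q s.
Proof.
rewrite spl_cons //; congr (_ || _); rewrite -spl_const.
by apply: eq_spl => t _ //; rewrite /taur /= eqSS.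
Qed.

Lemma bC (cQ cQx sX sT sY ryx : bool) :
  (sX -> cQ) -> (sT -> cQ) -> (sY -> cQ) -> (~~ ryx -> sY -> sX) ->
  (cQx || cQ) && ~~ (sX || sT) && ~~ (ryx && cQ || sY) =
  (~~ cQ && cQx) || (~~ ryx && (cQ && ~~ sT && ~~ sX)).
Proof.
by case: cQ; case: cQx; case: sX; case: sT; case: sY; case: ryx; move=> /= A B C D;
  try (by have := D isT isT); try (by have := A isT); try (by have := B isT);
  try (by have := C isT).
Qed.

Section Rec.
Variable r : rel nat.
Hypothesis Htr : forall x y z, ~~ r y x -> r y z -> r x z.

Lemma Bp_rec (Q : pred (seq nat)) (W : seq nat) y : uniq W -> 0 < size W ->
  count (Bp r Q y) (perms W) = \sum_(x <- W)
    (count (fun s => ~~ contp Q s && contp (fun t => Q (x :: t)) s) (perms (rem x W)) +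
     (if ~~ r y x then count (Bp r Q x) (perms (rem x W)) else 0)).
Proof.
move=> U S; rewrite count_perms_cons //; apply: eq_bigr => x _.
have -> : (if ~~ r y x then count (Bp r Q x) (perms (rem x W)) else 0) =
   count (fun s => ~~ r y x && Bp r Q x s) (perms (rem x W)).
  by case: (r y x) => //=; rewrite count_pred0.
apply: count_disj => s.
  by rewrite /Bp; case: (contp Q s); rewrite ?andbF.
rewrite /Bp contp_cons spl_cons // splY_cons.
apply: bC; try exact: spl_contp.
move=> H; apply: spl_imp => // t; rewrite /taur /= => /andP [-> H2].
exact: Htr H H2.
Qed.

Lemma Tsum (Q : pred (seq nat)) (W : seq nat) : uniq W -> 0 < size W ->
  \sum_(x <- W) count (fun s => ~~ contp Q s && contp (fun t => Q (x :: t)) s)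
     (perms (rem x W)) + Acnt Q W = \sum_(x <- W) Acnt Q (rem x W).
Proof.
move=> U S; rewrite [Acnt Q W]/Acnt count_perms_cons // -big_split /=.
apply: eq_bigr => x _; rewrite /Acnt; apply/esym/count_disj => s.
  by rewrite /= contp_cons; case: (contp Q s); case: (contp _ s).
by rewrite /= contp_cons; case: (contp Q s); case: (contp _ s).
Qed.

Lemma Bp_eq (Q Q' : pred (seq nat)) :
  ~~ Q [::] -> ~~ Q' [::] -> (forall W, uniq W -> Acnt Q W = Acnt Q' W) ->
  forall n W y, uniq W -> size W = n ->
  count (Bp r Q y) (perms W) = count (Bp r Q' y) (perms W).
Proof.
move=> H0 H0' HA; elim=> [|n IH] W y U S.
  case: W S U => // _ _.
  by rewrite /= /Bp !contp_nil (negbTE H0) (negbTE H0').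
rewrite !Bp_rec ?S // !big_split /=; congr (_ + _).
  apply: (@addIn (Acnt Q W)); rewrite {2}HA // !Tsum ?S //.
  by apply: eq_big_seq => x Hx; rewrite HA // rem_uniq.
apply: eq_big_seq => x Hx; case: (r y x) => //=.
by rewrite IH ?rem_uniq ?size_rem ?S.
Qed.

Lemma N_split (Q : pred (seq nat)) (W : seq nat) y0 :
  (forall z, z \in W -> ~~ r y0 z) ->
  Ncnt r Q W = Acnt Q W + count (Bp r Q y0) (perms W).
Proof.
move=> Hy; rewrite /Ncnt /Acnt.
transitivity (count (fun s => ~~ contp Q s || Bp r Q y0 s) (perms W)).
  apply: eq_in_count => s Hs; rewrite /Bp.
  have -> : spl (fun t => taur r (y0 :: t)) Q s = false.
    apply/negP => /splP [i /andP [/contpP [t St /andP [Hsz Hr]] _]].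
    move: Hsz Hr => /= /eqP [Hsz] Hr.
    have Hz : nth 0 t 0 \in W.
      apply: (mem_perms_sub Hs (subseq_trans St (take_subseq _ _))).
      by apply: mem_nth; rewrite Hsz.
    by move: (Hy _ Hz); rewrite Hr.
  rewrite andbT; case C: (contp Q s) => //=.
  by apply/negP => /spl_contp; rewrite C.
apply: count_disj => s //=; rewrite /Bp.
by case: (contp Q s).
Qed.

Lemma N_eq (Q Q' : pred (seq nat)) (W : seq nat) y0 :
  ~~ Q [::] -> ~~ Q' [::] -> (forall W, uniq W -> Acnt Q W = Acnt Q' W) ->
  uniq W -> (forall z, z \in W -> ~~ r y0 z) ->
  Ncnt r Q W = Ncnt r Q' W.
Proof.
move=> H0 H0' HA U Hy; rewrite !(N_split _ Hy) HA //.
by rewrite (Bp_eq H0 H0' HA y0 U erefl).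
Qed.

End Rec.


Definition pat2 (j0 j1 : nat) (t : seq nat) : bool :=
  (size t == 2) && (nth 0 t j0 < nth 0 t j1).

Definition K n := Ncnt ltn (pat3 0 1 2) (iota 0 n).

Lemma Htr_lt : forall x y z, ~~ ltn y x -> ltn y z -> ltn x z.
Proof. move=> x y z /=; lia. Qed.

Lemma Htr_gt : forall x y z, ~~ (fun a b => b < a) y x -> (fun a b => b < a) y z ->
  (fun a b => b < a) x z.
Proof. move=> x y z /=; lia. Qed.

Lemma pat3_comp i0 i1 i2 N t : (forall z, z \in t -> z <= N) ->
  i0 < 3 -> i1 < 3 -> i2 < 3 ->
  pat3 i0 i1 i2 (map (fun x => N - x) t) = pat3 i2 i1 i0 t.
Proof.
move=> HN H0 H1 H2; rewrite /pat3 size_map; case: eqP => //= H3.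
have Hn : forall i, i < 3 -> nth 0 t i <= N.
  by move=> i Hi; apply: HN; apply: mem_nth; rewrite H3.
rewrite !(nth_map 0) ?H3 // !ltn_sub2lE ?Hn //.
by rewrite andbC.
Qed.

Lemma N_lt i0 i1 i2 n : perm_eq [:: i0; i1; i2] [:: 0; 1; 2] ->
  Ncnt ltn (pat3 i0 i1 i2) (iota 0 n) = K n.
Proof.
move=> H; rewrite /K; apply: (N_eq (y0:=n) Htr_lt).
- by [].
- by [].
- by move=> W U; apply: A_all.
- exact: iota_uniq.
- by move=> z; rewrite mem_iota /=; lia.
Qed.

Lemma N_gt i0 i1 i2 n : perm_eq [:: i0; i1; i2] [:: 0; 1; 2] ->
  Ncnt (fun a b => b < a) (pat3 i0 i1 i2) (iota 0 n) = K n.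
Proof.
move=> H.
rewrite (N_eq (Q':=pat3 0 1 2) (y0:=0) Htr_gt) //; first last.
- exact: iota_uniq.
- by move=> W U; apply: A_all.
pose f := fun x => n.-1 - x.
have Hb : forall z, z \in iota 0 n -> z <= n.-1 by move=> z; rewrite mem_iota; lia.
have If : {in iota 0 n &, injective f}.
  by move=> a b Ha Hb' E; have := Hb a Ha; have := Hb b Hb'; rewrite /f in E; lia.
have P : perm_eq (map f (iota 0 n)) (iota 0 n).
  have U1 : uniq (map f (iota 0 n)) by rewrite map_inj_in_uniq // iota_uniq.
  apply: uniq_perm => //; first exact: iota_uniq.
  apply: (uniq_min_size U1 _ _).2; last by rewrite size_map.
  move=> z /mapP [x]; rewrite !mem_iota /f; lia.
rewrite /Ncnt -(count_perms_perm _ P) count_perms_map ?iota_uniq //.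
rewrite -(N_lt n (_ : perm_eq [:: 2; 1; 0] [:: 0; 1; 2])) //.
apply: eq_in_count => s Hs /=; rewrite spl_map; congr negb.
have Ht : forall t, subseq t s -> forall z, z \in t -> z <= n.-1.
  by move=> t St z Hz; apply: Hb; apply: (mem_perms_sub Hs St).
apply: eq_spl => t St.
  rewrite /taur size_map; case: eqP => //= H2.
  have Hn : forall i, i < 2 -> nth 0 t i <= n.-1.
    by move=> i Hi; apply: (Ht t St); apply: mem_nth; rewrite H2.
  by rewrite !(nth_map 0) ?H2 // ltn_sub2lE ?Hn.
by rewrite pat3_comp // => z; apply: Ht.
Qed.

Lemma N2 j0 j1 i0 i1 i2 n : perm_eq [:: j0; j1] [:: 0; 1] ->
  perm_eq [:: i0; i1; i2] [:: 0; 1; 2] ->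
  count (fun s => ~~ spl (pat2 j0 j1) (pat3 i0 i1 i2) s) (perms (iota 0 n)) = K n.
Proof.
move=> Hj Hi.
have M : forall j, j \in [:: j0; j1] -> (j == 0) || (j == 1).
  by move=> j; rewrite (perm_mem Hj) !inE.
have := M j0; have := M j1; rewrite !inE !eqxx !orbT.
move=> /(_ isT) /orP [] /eqP E1; move=> /(_ isT) /orP [] /eqP E0; subst; move: Hj => //= _.
all: first [exact: N_lt | exact: N_gt | idtac].
Qed.

Lemma pat2_rev j0 j1 t : j0 < 2 -> j1 < 2 -> pat2 j0 j1 (rev t) = pat2 (1 - j0) (1 - j1) t.
Proof.
move=> H0 H1; rewrite /pat2 size_rev; case: eqP => //= H.
by rewrite !nth_rev ?H // !subSS.
Qed.

Lemma N1 j0 j1 i0 i1 i2 n : perm_eq [:: 1 - j0; 1 - j1] [:: 0; 1] ->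
  perm_eq [:: 2 - i0; 2 - i1; 2 - i2] [:: 0; 1; 2] ->
  j0 < 2 -> j1 < 2 -> i0 < 3 -> i1 < 3 -> i2 < 3 ->
  count (fun s => ~~ spl (pat3 i0 i1 i2) (pat2 j0 j1) s) (perms (iota 0 n)) = K n.
Proof.
move=> Hj Hi ? ? ? ? ?; rewrite -(N2 n Hj Hi).
rewrite -(count_perms_rev (fun s => ~~ spl (pat3 i0 i1 i2) (pat2 j0 j1) s)).
apply: eq_count => s /=; rewrite spl_rev; congr negb.
by apply: eq_spl => t _; rewrite ?pat2_rev ?pat3_rev.
Qed.


Lemma subseq_idx (t s : seq nat) : subseq t s <->
  exists g : nat -> nat, [/\ (forall j, j < size t -> g j < size s),
    (forall j j', j < j' -> j' < size t -> g j < g j') &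
    (forall j, j < size t -> nth 0 t j = nth 0 s (g j))].
Proof.
elim: s t => [|x s IH] t.
  split; first by rewrite subseq0 => /eqP ->; exists id; split.
  case: t => [|y t] [g [Hb _ _]]; first exact: sub0seq.
  by move: (Hb 0 isT).
split.
  case: t => [|y t]; first by exists id; split.
  rewrite /=; case: eqP => [->|ne].
    case/IH => g [Hb Hm Hn].
    exists (fun j => if j is j'.+1 then (g j').+1 else 0); split.
    - by case=> //= j Hj; apply: Hb.
    - case=> [|j] [|j'] //= H1 H2; apply: Hm => //.
    - by case=> //= j Hj; apply: Hn.
  case/IH => g [Hb Hm Hn]; exists (fun j => (g j).+1); split.
  - by move=> j Hj; rewrite /= ltnS Hb.
  - by move=> j j' H1 H2; rewrite ltnS Hm.
  - by move=> j Hj; rewrite Hn.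
case: t => [|y t]; first by rewrite sub0seq.
move=> [g [Hb Hm Hn]].
case: (posnP (g 0)) => H0.
  have Ey : y = x by move: (Hn 0 isT); rewrite H0.
  rewrite /= Ey eqxx; apply/IH; exists (fun j => (g j.+1).-1); split.
  - move=> j Hj; have := Hb j.+1 Hj; have := Hm 0 j.+1 isT Hj; rewrite H0 /=; lia.
  - move=> j j' H1 H2; have := Hm j.+1 j'.+1 H1 H2; have := Hm 0 j.+1 isT (ltn_trans H1 H2).
    by rewrite H0; lia.
  - move=> j Hj; have := Hn j.+1 Hj; rewrite /= => ->; have := Hm 0 j.+1 isT Hj; rewrite H0.
    by case: (g j.+1).
have Hpos : forall j, j < (size t).+1 -> 0 < g j.
  by case=> // j Hj; apply: leq_trans H0 (ltnW (Hm 0 j.+1 isT Hj)).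
have : subseq (y :: t) s.
  apply/IH; exists (fun j => (g j).-1); split.
  - move=> j Hj; have := Hb j Hj; have := Hpos j Hj; rewrite /=; lia.
  - move=> j j' H1 H2; have := Hm j j' H1 H2; have := Hpos j (ltn_trans H1 H2); lia.
  - move=> j Hj; rewrite (Hn j Hj); have := Hpos j Hj; by case: (g j).
by move/subseq_trans; apply; exact: subseq_cons.
Qed.

Definition popP k (p : pop k) (t : seq nat) : bool :=
  (size t == k) && [forall j : 'I_k, forall l : 'I_k, p j l ==> (nth 0 t j < nth 0 t l)].

Definition plist n (pi : 'S_n) : seq nat := [seq val (pi i) | i <- enum 'I_n].

Lemma size_plist n (pi : 'S_n) : size (plist pi) = n.
Proof. by rewrite size_map size_enum_ord. Qed.

Lemma plist_nth n (pi : 'S_n) (i : 'I_n) : nth 0 (plist pi) i = pi i.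
Proof. by rewrite (nth_map i) ?size_enum_ord // nth_ord_enum. Qed.

Lemma contains_contp k n (p : pop k.+1) (pi : 'S_n) :
  contains p pi = contp (popP p) (plist pi).
Proof.
apply/existsP/contpP => [[f /forallP Hf]|[t St /andP [/eqP Hsz /forallP Hall]]].
  exists (mkseq (fun j => nth 0 (plist pi) (nat_of_ord (f (inord j)))) k.+1).
    apply/subseq_idx; exists (fun j => nat_of_ord (f (inord j))); split.
    - by move=> j _; rewrite size_plist.
    - move=> j j' H1; rewrite size_mkseq => H2.
      have := forallP (Hf (inord j)) (inord j'); case/andP => /implyP H _.
      apply: H; rewrite !inordK //; exact: ltn_trans H1 H2.
    - by move=> j; rewrite size_mkseq => Hj; rewrite nth_mkseq.
  rewrite /popP size_mkseq eqxx /=; apply/forallP => j; apply/forallP => l.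
  apply/implyP => Hp; rewrite !nth_mkseq // !inord_val !plist_nth.
  by have := forallP (Hf j) l; case/andP => _ /implyP; apply.
case/subseq_idx: St => g [Hb Hm Hn].
have H0 : g 0 < n by rewrite -(size_plist pi); apply: Hb; rewrite Hsz.
pose o := Ordinal H0.
have Hv : forall j : 'I_k.+1, val (insubd o (g j)) = g j.
  move=> j; rewrite val_insubd; case: ifP => // /negP; case.
  by rewrite -(size_plist pi); apply: Hb; rewrite Hsz.
exists [ffun j : 'I_k.+1 => insubd o (g j)]; apply/forallP => j; apply/forallP => l.
rewrite !ffunE; apply/andP; split.
  by apply/implyP => H; rewrite !Hv; apply: Hm; rewrite ?Hsz.
apply/implyP => Hp; rewrite -!plist_nth !Hv -!Hn ?Hsz //.
by have := forallP (Hall j) l => /implyP; apply.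
Qed.

Lemma plist_inj n : injective (@plist n).
Proof.
move=> p1 p2 E; apply/permP => i; apply: val_inj.
by rewrite /= -!plist_nth E.
Qed.

Lemma perm_plist n : perm_eq (map (@plist n) (enum 'S_n)) (perms (iota 0 n)).
Proof.
apply: uniq_perm; first by rewrite map_inj_uniq ?enum_uniq //; exact: plist_inj.
  exact: permutations_uniq.
move=> u; rewrite mem_permutations; apply/mapP/idP => [[pi _ ->]|Hu].
  have U : uniq (plist pi).
    rewrite map_inj_uniq ?enum_uniq // => i j E; apply: (@perm_inj _ pi).
    exact: val_inj.
  apply: uniq_perm => //; first exact: iota_uniq.
  apply: (uniq_min_size U _ _).2; last by rewrite size_plist size_iota.
  by move=> z /mapP [i _ ->]; rewrite mem_iota /=.
have Uu : uniq u by rewrite (perm_uniq Hu) iota_uniq.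
have Su : size u = n by rewrite (perm_size Hu) size_iota.
have Bu : forall i, i < n -> nth 0 u i < n.
  move=> i Hi; have : nth 0 u i \in iota 0 n by rewrite -(perm_mem Hu) mem_nth ?Su.
  by rewrite mem_iota.
pose g := fun i : 'I_n => insubd i (nth 0 u i).
have Hg : forall i : 'I_n, val (g i) = nth 0 u i.
  by move=> i; rewrite val_insubd Bu.
have Ig : injective g.
  move=> i j E; apply: val_inj => /=; apply/eqP.
  by rewrite -(nth_uniq 0 _ _ Uu) ?Su // -!Hg E.
exists (perm Ig); first by rewrite mem_enum.
apply: (@eq_from_nth _ 0); first by rewrite size_plist.
move=> i; rewrite Su => Hi.
by rewrite -[i]/(nat_of_ord (Ordinal Hi)) plist_nth permE Hg.
Qed.

Lemma av_count_list k (p : pop k.+1) n :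
  av_count p n = count (fun s => ~~ contp (popP p) s) (perms (iota 0 n)).
Proof.
rewrite /av_count cardsE cardE /enum_mem size_filter.
rewrite -(seq.permP (perm_plist n)) count_map -enumT.
by apply: eq_count => pi /=; rewrite -contains_contp.
Qed.


Lemma subseq_catE (t1 t2 s : seq nat) : subseq (t1 ++ t2) s ->
  exists i, subseq t1 (take i s) && subseq t2 (drop i s).
Proof.
elim: s t1 => [|x s IH] t1.
  by case: t1 => [|//]; case: t2 => [|//] _; exists 0.
case: t1 => [|y t1] /=.
  by move=> H; exists 0; rewrite take0 drop0 sub0seq.
case: eqP => [->|ne] H.
  have [i /andP [A B]] := IH t1 H; exists i.+1 => /=.
  by rewrite eqxx A B.
have [i /andP [A B]] := IH (y :: t1) H; exists i.+1 => /=.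
by case: eqP => // _; rewrite A B.
Qed.

Lemma contp_split k (P P1 P2 : pred (seq nat)) s :
  (forall t, P t = P1 (take k t) && P2 (drop k t)) -> (forall u, P1 u -> size u = k) ->
  contp P s = spl P1 P2 s.
Proof.
move=> HP Hk; apply/contpP/splP => [[t St]|[i /andP [/contpP [t1 S1 H1] /contpP [t2 S2 H2]]]].
  rewrite HP => /andP [A B].
  have := St; rewrite -{1}(cat_take_drop k t) => /subseq_catE [i /andP [C D]].
  by exists i; apply/andP; split; apply/contpP; [exists (take k t) | exists (drop k t)].
exists (t1 ++ t2).
  by rewrite -(cat_take_drop i s); apply: cat_subseq.
by rewrite HP take_size_cat ?drop_size_cat ?H1 ?H2 // Hk.
Qed.

Lemma popP5 a b c d e t : 0 < a <= 5 -> 0 < b <= 5 -> 0 < c <= 5 -> 0 < d <= 5 ->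
  0 < e <= 5 ->
  popP (pop5 a b c d e) t =
  (size t == 5) && (nth 0 t (c - 1) < nth 0 t (b - 1)) &&
  (nth 0 t (b - 1) < nth 0 t (a - 1)) && (nth 0 t (c - 1) < nth 0 t (a - 1)) &&
  (nth 0 t (e - 1) < nth 0 t (d - 1)).
Proof.
move=> Ha Hb Hc Hd He; rewrite /popP; case: (size t == 5) => //=.
apply/forallP/idP => [H|H j].
  have K : forall u v, 0 < u <= 5 -> 0 < v <= 5 ->
      (u, v) \in [:: (c, b); (b, a); (c, a); (e, d)] ->
      nth 0 t (u - 1) < nth 0 t (v - 1).
    move=> u v Hu Hv Huv; have /implyP H' := forallP (H (inord (u - 1))) (inord (v - 1)).
    have Ku : ((inord (u - 1) : 'I_5) : nat) = u - 1 by rewrite inordK; lia.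
    have Kv : ((inord (v - 1) : 'I_5) : nat) = v - 1 by rewrite inordK; lia.
    rewrite -Ku -Kv; apply: H'; rewrite /pop5 Ku Kv.
    have -> : (u - 1).+1 = u by lia.
    by have -> : (v - 1).+1 = v by lia.
  by rewrite !K // !inE !eqxx ?orbT.
apply/forallP => l; apply/implyP; rewrite /pop5 !inE.
have Ej : forall u, j.+1 = u -> (j : nat) = u - 1 by move=> u; lia.
have El : forall u, l.+1 = u -> (l : nat) = u - 1 by move=> u; lia.
move: H => /andP [/andP [/andP [H1 H2] H3] H4].
by case/or4P => /eqP [/Ej -> /El ->].
Qed.

Lemma case1_pt a b c d e t : 0 < a <= 3 -> 0 < b <= 3 -> 0 < c <= 3 ->
  3 < d <= 5 -> 3 < e <= 5 ->
  popP (pop5 a b c d e) t =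
  pat3 (c - 1) (b - 1) (a - 1) (take 3 t) && pat2 (e - 4) (d - 4) (drop 3 t).
Proof.
move=> Ha Hb Hc Hd He; rewrite popP5; try lia.
rewrite /pat3 /pat2 !nth_drop !nth_take; try lia.
have -> : 3 + (e - 4) = e - 1 by lia.
have -> : 3 + (d - 4) = d - 1 by lia.
have <- : (size (take 3 t) == 3) && (size (drop 3 t) == 2) = (size t == 5).
  by case: t => [|x0 [|x1 [|x2 [|x3 [|x4 [|x5 t]]]]]].
case: (size (take 3 t) == 3); case: (size (drop 3 t) == 2); rewrite /= ?andbF //.
case H1: (nth 0 t (c - 1) < nth 0 t (b - 1)); case H2: (nth 0 t (b - 1) < nth 0 t (a - 1)) => //=.
by rewrite (ltn_trans H1 H2).
Qed.

Lemma case2_pt a b c d e t : 2 < a <= 5 -> 2 < b <= 5 -> 2 < c <= 5 ->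
  0 < d <= 2 -> 0 < e <= 2 ->
  popP (pop5 a b c d e) t =
  pat2 (e - 1) (d - 1) (take 2 t) && pat3 (c - 3) (b - 3) (a - 3) (drop 2 t).
Proof.
move=> Ha Hb Hc Hd He; rewrite popP5; try lia.
rewrite /pat3 /pat2 !nth_drop !nth_take; try lia.
have -> : 2 + (a - 3) = a - 1 by lia.
have -> : 2 + (b - 3) = b - 1 by lia.
have -> : 2 + (c - 3) = c - 1 by lia.
have <- : (size (take 2 t) == 2) && (size (drop 2 t) == 3) = (size t == 5).
  by case: t => [|x0 [|x1 [|x2 [|x3 [|x4 [|x5 t]]]]]].
case: (size (take 2 t) == 2); case: (size (drop 2 t) == 3); rewrite /= ?andbF //.
case H1: (nth 0 t (c - 1) < nth 0 t (b - 1)); case H2: (nth 0 t (b - 1) < nth 0 t (a - 1)) => //=.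
  by rewrite (ltn_trans H1 H2) andbT.
all: by rewrite andbF.
Qed.

Lemma case1_count a b c d e n : 0 < a <= 3 -> 0 < b <= 3 -> 0 < c <= 3 ->
  3 < d <= 5 -> 3 < e <= 5 ->
  perm_eq [:: 1 - (e - 4); 1 - (d - 4)] [:: 0; 1] ->
  perm_eq [:: 2 - (c - 1); 2 - (b - 1); 2 - (a - 1)] [:: 0; 1; 2] ->
  count (fun s => ~~ contp (popP (pop5 a b c d e)) s) (perms (iota 0 n)) = K n.
Proof.
move=> Ha Hb Hc Hd He Hj Hi.
rewrite -(@N1 (e - 4) (d - 4) (c - 1) (b - 1) (a - 1) n Hj Hi); try lia.
apply: eq_count => s /=; congr negb.
apply: (@contp_split 3) => [t|u]; first exact: case1_pt.
by case/andP => /andP [/eqP].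
Qed.

Lemma case2_count a b c d e n : 2 < a <= 5 -> 2 < b <= 5 -> 2 < c <= 5 ->
  0 < d <= 2 -> 0 < e <= 2 ->
  perm_eq [:: e - 1; d - 1] [:: 0; 1] ->
  perm_eq [:: c - 3; b - 3; a - 3] [:: 0; 1; 2] ->
  count (fun s => ~~ contp (popP (pop5 a b c d e)) s) (perms (iota 0 n)) = K n.
Proof.
move=> Ha Hb Hc Hd He Hj Hi.
rewrite -(@N2 (e - 1) (d - 1) (c - 3) (b - 3) (a - 3) n Hj Hi).
apply: eq_count => s /=; congr negb.
apply: (@contp_split 2) => [t|u]; first exact: case2_pt.
by case/andP => /eqP.
Qed.

Lemma av_adm a b c d e n : admissible a b c d e ->
  av_count (pop5 a b c d e) n = K n.
Proof.
rewrite av_count_list; case/orP => /andP [H1 H2].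
  have Ha : a \in [:: 1; 2; 3] by rewrite -(perm_mem H1) !inE eqxx.
  have Hb : b \in [:: 1; 2; 3] by rewrite -(perm_mem H1) !inE eqxx ?orbT.
  have Hc : c \in [:: 1; 2; 3] by rewrite -(perm_mem H1) !inE eqxx ?orbT.
  have Hd : d \in [:: 4; 5] by rewrite -(perm_mem H2) !inE eqxx.
  have He : e \in [:: 4; 5] by rewrite -(perm_mem H2) !inE eqxx ?orbT.
  move: H1 H2; move: Ha Hb Hc Hd He; rewrite !inE.
  move=> /or3P [] /eqP -> /or3P [] /eqP -> /or3P [] /eqP -> /orP [] /eqP -> /orP [] /eqP ->;
  move=> //= _ _; by apply: case1_count.
have Ha : a \in [:: 3; 4; 5] by rewrite -(perm_mem H1) !inE eqxx.
have Hb : b \in [:: 3; 4; 5] by rewrite -(perm_mem H1) !inE eqxx ?orbT.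
have Hc : c \in [:: 3; 4; 5] by rewrite -(perm_mem H1) !inE eqxx ?orbT.
have Hd : d \in [:: 1; 2] by rewrite -(perm_mem H2) !inE eqxx.
have He : e \in [:: 1; 2] by rewrite -(perm_mem H2) !inE eqxx ?orbT.
move: H1 H2; move: Ha Hb Hc Hd He; rewrite !inE.
move=> /or3P [] /eqP -> /or3P [] /eqP -> /or3P [] /eqP -> /orP [] /eqP -> /orP [] /eqP ->;
move=> //= _ _; by apply: case2_count.
Qed.

Theorem mainTheorem12 (a b c d e a' b' c' d' e' : nat) :
  admissible a b c d e -> admissible a' b' c' d' e' ->
  wilf_equiv (pop5 a b c d e) (pop5 a' b' c' d' e').
Proof.
by move=> H H' n _; rewrite (av_adm n H) (av_adm n H').
Qed.
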